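(* Let $m\ge1$ and $p_1,\dots,p_m$ be distinct primes, and let $S=\{1\}\cup\{p_1,\dots,p_m\}\cup\{p_ip_j: 1\le i<j\le m\}$, so $|S|=\frac12(m^2+m+2)$. Then $[S]$ is invertible, $i_-([S])=m$ and $i_+([S])=1+\binom m2=\frac12(m^2-m+2)$.
   Context: The LCM matrix $[S]$ of $S=\{x_1,\dots,x_n\}$ has $(i,j)$ entry $\mathrm{lcm}(x_i,x_j)$; $i_+(M)$ and $i_-(M)$ denote the numbers of positive and negative eigenvalues (with multiplicity) of a real symmetric matrix $M$. *)

(* Defs.v *)
(* Matrices are taken with entries in algC (algebraic complex
   numbers, an algebraically closed num field containing the integers), so that
   the characteristic polynomial splits and eigenvalues (with multiplicity) are
   well defined. *)
From HB Require Import structures.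
From mathcomp Require Import all_boot all_order all_algebra.
From mathcomp Require Import algC.
Set Implicit Arguments. Unset Strict Implicit. Unset Printing Implicit Defensive.
Import Order.TTheory GRing.Theory Num.Theory.
Local Open Scope ring_scope.

Definition eigenvalues (n : nat) (M : 'M[algC]_n) : seq algC :=
  sval (closed_field_poly_normal (char_poly M)).

Definition ipos (n : nat) (M : 'M[algC]_n) : nat :=
  count (fun x => 0 < x) (eigenvalues M).
Definition ineg (n : nat) (M : 'M[algC]_n) : nat :=
  count (fun x => x < 0) (eigenvalues M).

Definition lcm_matrix (s : seq nat) : 'M[algC]_(size s) :=
  \matrix_(i < size s, j < size s) (lcmn (nth 0%N s i) (nth 0%N s j))%:R.

Definition S_seq (m : nat) (p : 'I_m -> nat) : seq nat :=
  1%N :: [seq p i | i <- enum 'I_m]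
      ++ [seq (p ij.1 * p ij.2)%N | ij <- enum [pred ij : 'I_m * 'I_m | (val ij.1 < val ij.2)%N]].

(* Main.v *)
Require Import Defs.
From HB Require Import structures.
From mathcomp Require Import all_boot all_order all_algebra.
From mathcomp Require Import algC.
From mathcomp Require Import zify spectral sesquilinear.

Module Part1.
Set Implicit Arguments. Unset Strict Implicit. Unset Printing Implicit Defensive.
Import Order.TTheory GRing.Theory Num.Theory Num.Def.
Local Open Scope ring_scope.

Definition ctr {m n} (M : 'M[algC]_(m, n)) : 'M[algC]_(n, m) := map_mx conjC (M^T).

Lemma ctr_mul m n p (A : 'M[algC]_(m, n)) (B : 'M[algC]_(n, p)) :
  ctr (A *m B) = ctr B *m ctr A.
Proof. by rewrite /ctr trmx_mul map_mxM. Qed.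

Lemma ctrK m n (A : 'M[algC]_(m, n)) : ctr (ctr A) = A.
Proof.
by apply/matrixP => i j; rewrite /ctr !mxE conjCK.
Qed.

Definition qf N (A : 'M[algC]_N) (v : 'rV_N) := (v *m A *m ctr v) 0 0.

Lemma qf_diag N (C : 'M[algC]_N) d v :
  qf (ctr C *m diag_mx d *m C) v = \sum_i d 0 i * `|(v *m ctr C) 0 i| ^+ 2.
Proof.
rewrite /qf !mulmxA.
rewrite -[_ *m C *m ctr v]mulmxA -[C *m ctr v]ctrK ctr_mul ctrK.
rewrite mul_mx_diag !mxE; apply: eq_bigr => i _.
by rewrite !mxE normCK mulrCA mulrA.
Qed.

End Part1.
Import Part1.

Module Part2.
Set Implicit Arguments. Unset Strict Implicit. Unset Printing Implicit Defensive.
Import Order.TTheory GRing.Theory Num.Theory Num.Def.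
Local Open Scope ring_scope.

Section Sel.
Variable N : nat.
Variable A : {set 'I_N}.
Definition sel : 'M[algC]_(#|A|, N) := \matrix_(j, c) (c == enum_val j)%:R.

Lemma sel_rank : \rank sel = #|A|.
Proof.
apply/eqP; rewrite eqn_leq rank_leq_row /=.
have : sel *m sel^T = 1%:M.
  apply/matrixP => j k; rewrite !mxE.
  rewrite (bigD1 (enum_val j)) //= big1 ?addr0.
    by rewrite !mxE eqxx (inj_eq enum_val_inj) mul1r eq_sym.
  by move=> c /negbTE hc; rewrite !mxE hc mul0r.
move=> h; rewrite -{1}(mxrank1 algC #|A|) -h.
exact: mxrankM_maxl.
Qed.

Lemma sel_out (x : 'rV_#|A|) c : c \notin A -> (x *m sel) 0 c = 0.
Proof.
move=> cA; rewrite !mxE big1 // => j _; rewrite !mxE.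
case: eqP => [e|]; last by rewrite mulr0.
by move: cA; rewrite e enum_valP.
Qed.

Lemma sel_tr_zero (y : 'rV_N) c : y *m sel^T = 0 -> c \in A -> y 0 c = 0.
Proof.
move=> /rowP h cA; have := h (enum_rank_in cA c).
rewrite !mxE (bigD1 c) //= big1 ?addr0.
  by rewrite !mxE enum_rankK_in // eqxx mulr1.
by move=> k /negbTE hk; rewrite !mxE enum_rankK_in // hk mulr0.
Qed.
End Sel.

Lemma sylv_le N (C1 C2 : 'M[algC]_N) (d1 d2 : 'rV[algC]_N) :
  C1 \in unitmx -> (forall i, d2 0 i \is Num.real) ->
  ctr C1 *m diag_mx d1 *m C1 = ctr C2 *m diag_mx d2 *m C2 ->
  (#|[set i | (d1 0 i < 0)%R]| <= #|[set i | (d2 0 i < 0)%R]|)%N.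
Proof.
move=> uC1 rd2 eqL.
set A1 := [set i : 'I_N | d1 0 i < 0]; set A2 := [set i : 'I_N | d2 0 i < 0].
rewrite leqNgt; apply/negP => lt21.
pose U1 := sel A1 *m invmx (ctr C1).
pose U2 := kermx (ctr C2 *m (sel A2)^T).
have uC1t : ctr C1 \in unitmx.
  by rewrite /ctr map_unitmx unitmx_tr.
have rU1 : \rank U1 = #|A1|.
  by rewrite mxrankMfree ?sel_rank // row_free_unit unitmx_inv.
have rU2 : (N - #|A2| <= \rank U2)%N.
  rewrite mxrank_ker leq_sub2l //.
  apply: leq_trans (mxrankM_maxr _ _) _.
  by rewrite mxrank_tr sel_rank.
have : (0 < \rank (U1 :&: U2))%N.
  have := mxrank_sum_cap U1 U2.
  have := rank_leq_col (U1 + U2)%MS.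
  move: rU1 rU2 lt21; set r1 := \rank U1; set r2 := \rank U2.
  set r3 := \rank (U1 :&: U2)%MS; set r4 := \rank (U1 + U2)%MS.
  have : (#|A2| <= N)%N by apply: leq_trans (max_card _) _; rewrite card_ord.
  lia.
rewrite lt0n mxrank_eq0 => nz.
have [i nzi] : exists i, row i (U1 :&: U2)%MS != 0.
  apply/existsP; move: nz; apply: contraR; rewrite negb_exists => /forallP h.
  apply/eqP/row_matrixP => i; rewrite row0; exact/eqP/negPn/h.
set v := row i _ in nzi.
have sv : (v <= U1 :&: U2)%MS by exact: row_sub.
have [sv1 sv2] : (v <= U1)%MS /\ (v <= U2)%MS.
  by split; apply: submx_trans sv _; [exact: capmxSl | exact: capmxSr].
have [x vx] := submxP sv1.
have hy1 : v *m ctr C1 = x *m sel A1.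
  by rewrite vx /U1 mulmxA mulmxKV.
have y1nz : v *m ctr C1 != 0.
  apply: contraNneq nzi => h.
  by rewrite -[v](mulmxK uC1t) h mul0mx.
have q1 : qf (ctr C1 *m diag_mx d1 *m C1) v < 0.
  rewrite qf_diag -oppr_gt0 -sumrN.
  have [j nzj] : exists j, (v *m ctr C1) 0 j != 0.
    apply/existsP; move: y1nz; apply: contraR; rewrite negb_exists => /forallP h.
    apply/eqP/rowP => j; move: (h j); rewrite negbK !mxE => /eqP. done.
  rewrite (bigD1 j) //=.
  have hj : j \in A1.
    apply: contraNT nzj => jA; by rewrite hy1 sel_out.
  apply: ltr_wpDr.
    apply: sumr_ge0 => k _.
    case: (boolP (k \in A1)) => kA.
      rewrite -mulNr mulr_ge0 // ?exprn_ge0 //.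
      by move: kA; rewrite inE oppr_ge0 => /ltW.
    by rewrite hy1 sel_out // normr0 expr0n mulr0 oppr0.
  rewrite -mulNr mulr_gt0 // ?exprn_gt0 ?normr_gt0 //.
  by move: hj; rewrite inE oppr_gt0.
have q2 : 0 <= qf (ctr C2 *m diag_mx d2 *m C2) v.
  rewrite qf_diag; apply: sumr_ge0 => k _.
  move: sv2; rewrite sub_kermx mulmxA => /eqP h0.
  case: (boolP (k \in A2)) => kA.
    by rewrite (sel_tr_zero h0 kA) normr0 expr0n mulr0.
  rewrite mulr_ge0 ?exprn_ge0 //.
  by move: kA; rewrite inE real_ltNge ?real0 // negbK.
by move: q1; rewrite eqL => /(le_lt_trans q2); rewrite ltxx.
Qed.

End Part2.
Import Part2.

Module Part3.
Set Implicit Arguments. Unset Strict Implicit. Unset Printing Implicit Defensive.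
Import Order.TTheory GRing.Theory Num.Theory Num.Def.
Local Open Scope ring_scope.

Lemma char_poly_conj N (P A : 'M[algC]_N) : P \in unitmx ->
  char_poly (invmx P *m A *m P) = char_poly A.
Proof.
move=> uP; rewrite /char_poly /char_poly_mx.
set Q := map_mx polyC P; set Qi := map_mx polyC (invmx P).
have QiQ : Qi *m Q = 1%:M by rewrite -map_mxM mulVmx // map_mx1.
have -> : 'X%:M - map_mx polyC (invmx P *m A *m P)
        = Qi *m ('X%:M - map_mx polyC A) *m Q.
  by rewrite !map_mxM mulmxBr mulmxBl mul_mx_scalar -scalemxAl QiQ scalemx1.
rewrite !det_mulmx mulrC mulrA -det_mulmx.
by rewrite (mulmx1C QiQ) det1 mul1r.
Qed.

End Part3.
Import Part3.

Module Part4.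
Set Implicit Arguments. Unset Strict Implicit. Unset Printing Implicit Defensive.
Import Order.TTheory GRing.Theory Num.Theory Num.Def.
Local Open Scope ring_scope.

Lemma eig_perm N (L : 'M[algC]_N) P d : P \in unitmx ->
  L = invmx P *m diag_mx d *m P ->
  perm_eq (eigenvalues L) [seq d 0 i | i <- enum 'I_N].
Proof.
move=> uP eL; rewrite /eigenvalues; case: closed_field_poly_normal => r /= hr.
apply: prod_XsubC_eq; rewrite -[LHS]scale1r.
have <- : lead_coef (char_poly L) = 1 by apply/monicP; exact: char_poly_monic.
rewrite -hr eL char_poly_conj // char_poly_trig ?diag_mx_is_trig //.
rewrite big_map big_enum /=; apply: eq_bigr => i _; by rewrite mxE eqxx mulr1n.
Qed.

End Part4.
Import Part4.

Module Part5.
Set Implicit Arguments. Unset Strict Implicit. Unset Printing Implicit Defensive.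
Import Order.TTheory GRing.Theory Num.Theory Num.Def.
Local Open Scope ring_scope.

Lemma count_card N (d : 'rV[algC]_N) (a : pred algC) :
  count a [seq d 0 i | i <- enum 'I_N] = #|[set i | a (d 0 i)]|.
Proof.
rewrite count_map cardE size_filter /enum_mem -enumT /=.
rewrite filter_predT; apply: eq_count => i; by rewrite !inE.
Qed.

Lemma inertia N (L C : 'M[algC]_N) (g : 'rV[algC]_N) :
  L \is hermsymmx -> C \in unitmx -> (forall i, g 0 i \is Num.real) ->
  L = ctr C *m diag_mx g *m C ->
  ineg L = #|[set i | (g 0 i < 0)%R]| /\ ipos L = #|[set i | (0 < g 0 i)%R]|.
Proof.
move=> hL uC rg eL.
have /hermitian_normalmx /orthomx_spectralP eL2 := hL.
set P := spectralmx L in eL2; set sp := spectral_diag L in eL2.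
have uP : P \in unitmx by exact: spectral_unit.
have rsp : forall i, sp 0 i \is Num.real.
  by move=> i; have /mxOverP := hermitian_spectral_diag_real hL; apply.
have eL3 : L = ctr P *m diag_mx sp *m P.
  by rewrite {1}eL2 invmx_unitary ?spectral_unitarymx.
have pe := eig_perm uP eL2.
have eq1 : ctr P *m diag_mx sp *m P = ctr C *m diag_mx g *m C by rewrite -eL3.
have eqN : ctr P *m diag_mx (- sp) *m P = ctr C *m diag_mx (- g) *m C.
  by rewrite !raddfN /= !mulNmx eq1.
have uPP : P \in unitmx := uP.
split.
  rewrite /ineg (permP pe) count_card; apply/eqP; rewrite eqn_leq.
  rewrite (sylv_le uP rg eq1) (sylv_le uC rsp (esym eq1)) //.
rewrite /ipos (permP pe) count_card.
have e1 : forall (h : 'rV[algC]_N), [set i | 0 < h 0 i] = [set i | (- h) 0 i < 0].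
  by move=> h; apply/setP => i; rewrite !inE !mxE oppr_lt0.
rewrite !e1; apply/eqP; rewrite eqn_leq.
have rspN : forall i, (- sp) 0 i \is Num.real by move=> i; rewrite mxE realN.
have rgN : forall i, (- g) 0 i \is Num.real by move=> i; rewrite mxE realN.
by rewrite (sylv_le uP rgN eqN) (sylv_le uC rspN (esym eqN)).
Qed.

End Part5.
Import Part5.

Module Part6.
Set Implicit Arguments. Unset Strict Implicit. Unset Printing Implicit Defensive.
Import Order.TTheory GRing.Theory Num.Theory Num.Def.
Local Open Scope ring_scope.

Lemma sum_subsets (I : finType) (K : {set I}) (f : I -> algC) :
  \sum_(D : {set I} | D \subset K) \prod_(i in D) f i = \prod_(i in K) (1 + f i).
Proof.
pose F i := if i \in K then f i else 0.
have -> : \prod_(i in K) (1 + f i) = \prod_i (F i + 1).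
  rewrite big_mkcond /=; apply: eq_bigr => i _; rewrite /F.
  by case: (i \in K); rewrite ?add0r // addrC.
rewrite bigA_distr /=.
rewrite [LHS]big_mkcond /=; apply: eq_bigr => J _.
case: (boolP (J \subset K)) => JK.
  rewrite [LHS]big_mkcond /=; apply: eq_bigr => i _; rewrite /F.
  by case: (boolP (i \in J)) => iJ; rewrite ?(subsetP JK _ iJ).
have /subsetPn [i iJ iK] := JK.
by rewrite (bigD1 i) //= iJ /F (negbTE iK) mul0r.
Qed.

End Part6.
Import Part6.

Module Part7.
Set Implicit Arguments. Unset Strict Implicit. Unset Printing Implicit Defensive.
Import Order.TTheory GRing.Theory Num.Theory Num.Def.

Section NT.
Variables (m : nat) (p : 'I_m -> nat).
Hypothesis pinj : injective p.
Hypothesis pprime : forall i, prime (p i).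

Definition Pr (X : {set 'I_m}) : nat := \prod_(i in X) p i.

Lemma Pr_gt0 X : 0 < Pr X.
Proof. by apply: prodn_gt0 => i; exact: prime_gt0. Qed.

Lemma Pr_coprime (X Y : {set 'I_m}) : [disjoint X & Y] -> coprime (Pr X) (Pr Y).
Proof.
move=> dXY; rewrite /Pr.
apply: (big_ind (fun a => coprime a _)) => [|a b|i iX]; first exact: coprime1n.
  by rewrite coprimeMl => -> ->.
apply: (big_ind (fun b => coprime _ b)) => [|a b|j jY]; first exact: coprimen1.
  by rewrite coprimeMr => -> ->.
rewrite prime_coprime // dvdn_prime2 //; apply/negP => /eqP /pinj eij.
by move: dXY; rewrite disjoints_subset => /subsetP /(_ i iX); rewrite eij inE jY.
Qed.

Lemma Pr_split (X Y : {set 'I_m}) : Pr X = (Pr (X :&: Y) * Pr (X :\: Y))%N.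
Proof. by rewrite /Pr (big_setID Y). Qed.

Lemma Pr_gcd (X Y : {set 'I_m}) : gcdn (Pr X) (Pr Y) = Pr (X :&: Y).
Proof.
rewrite (Pr_split X Y) (Pr_split Y X) setIC -muln_gcdr.
have /eqP -> : coprime (Pr (X :\: Y)) (Pr (Y :\: X)).
  apply: Pr_coprime; rewrite disjoints_subset; apply/subsetP => i.
  by rewrite !inE => /andP[/negbTE -> _]; rewrite andbF.
by rewrite muln1.
Qed.

Lemma Pr_inj : injective Pr.
Proof.
suff sub : forall X Y, Pr X = Pr Y -> X \subset Y.
  by move=> X Y e; apply/eqP; rewrite eqEsubset !sub.
move=> X Y e; apply/subsetP => i iX; apply: contraT => iY.
have h1 : Pr (X :&: Y) = Pr X by rewrite -Pr_gcd e gcdnn.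
have h2 : Pr (X :\: Y) = 1%N.
  have := Pr_split X Y; rewrite h1 -{1}[Pr X]muln1 => /eqP.
  by rewrite eqn_mul2l eqn0Ngt Pr_gt0 /= => /eqP.
have : p i %| Pr (X :\: Y) by rewrite /Pr (bigD1 i) ?inE ?iX ?iY //= dvdn_mulr.
by rewrite h2 dvdn1 => /eqP hp; have := pprime i; rewrite hp.
Qed.

Lemma Pr_lcm (X Y : {set 'I_m}) : ((lcmn (Pr X) (Pr Y))%:R =
  (Pr X)%:R * (Pr Y)%:R / (Pr (X :&: Y))%:R :> algC)%R.
Proof.
have := muln_lcm_gcd (Pr X) (Pr Y); rewrite Pr_gcd => /(congr1 (fun n => (n%:R : algC)%R)).
rewrite !natrM => <-; rewrite mulfK // pnatr_eq0 -lt0n; exact: Pr_gt0.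
Qed.

End NT.

End Part7.
Import Part7.

Module Part8.
Set Implicit Arguments. Unset Strict Implicit. Unset Printing Implicit Defensive.
Import Order.TTheory GRing.Theory Num.Theory Num.Def.

Section SS.
Variable m : nat.

Definition ss : seq {set 'I_m} :=
  set0 :: [seq [set i] | i <- enum 'I_m]
      ++ [seq [set ij.1; ij.2] | ij <- enum [pred ij : 'I_m * 'I_m | (val ij.1 < val ij.2)%N]].

Lemma S_seq_ss (p : 'I_m -> nat) : S_seq p = map (Pr p) ss.
Proof.
rewrite /S_seq /ss /= map_cat -!map_comp /Pr big_set0; congr (_ :: _ ++ _).
  by apply: eq_map => i /=; rewrite big_set1.
apply/eq_in_map => -[a b]; rewrite mem_enum inE /= => ab.
rewrite big_setU1 /= ?big_set1 // inE; apply/eqP => e; move: ab; by rewrite e ltnn.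
Qed.

Lemma card_pair (a b : 'I_m) : (a < b)%N -> #|[set a; b]| = 2.
Proof. by move=> ab; rewrite cards2; case: eqP => // e; move: ab; rewrite e ltnn. Qed.

Lemma mem_ss D : (D \in ss) = (#|D| <= 2).
Proof.
apply/idP/idP.
  rewrite inE mem_cat => /or3P[/eqP->|/mapP[i _ ->]|/mapP[[a b]]].
  - by rewrite cards0.
  - by rewrite cards1.
  by rewrite mem_enum inE /= => ab ->; rewrite card_pair.
rewrite leq_eqVlt ltnS leq_eqVlt ltnS leqn0 => /or3P[/eqP c2|/eqP c1|/eqP c0].
- have /cards2P [a [b [ab ->]]] : #|D| == 2 by rewrite c2.
  rewrite inE mem_cat; apply/orP; right; apply/orP; right.
  case: (ltngtP a b) => [lab|lba|eab].
  + by apply/mapP; exists (a, b); rewrite // mem_enum inE.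
  + by apply/mapP; exists (b, a); rewrite /= ?mem_enum ?inE // setUC.
  + by move: ab; rewrite (val_inj eab) eqxx.
- have /cards1P [a ->] : #|D| == 1 by rewrite c1.
  by rewrite inE mem_cat map_f ?mem_enum ?orbT.
- by move/cards0_eq: c0 => ->; rewrite mem_head.
Qed.

Lemma uniq_ss : uniq ss.
Proof.
rewrite /ss cons_uniq cat_uniq; apply/and4P; split.
- rewrite mem_cat; apply/negP => /orP[/mapP[i _ e]|/mapP[[a b] H e]].
    by have := cards1 i; rewrite -e cards0.
  by move: H; rewrite mem_enum inE /= => /card_pair; rewrite -e cards0.
- by rewrite map_inj_uniq ?enum_uniq //; exact: set1_inj.
- apply/hasPn => D /mapP[[a b] H ->]; apply/mapP => -[i _ e].
  by move: H; rewrite mem_enum inE /= => /card_pair; rewrite e cards1.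
rewrite map_inj_in_uniq ?enum_uniq // => -[a b] [c d].
rewrite !mem_enum !inE /= => ab cd e.
have ha : a \in [set c; d] by rewrite -e !inE eqxx.
have hb : b \in [set c; d] by rewrite -e !inE eqxx orbT.
have hc : c \in [set a; b] by rewrite e !inE eqxx.
move: ha hb hc; rewrite !inE => /orP[] /eqP ea /orP[] /eqP eb /orP[] /eqP ec;
  subst; rewrite ?ltnn // in ab cd *; try by (move: ab cd; lia).
Qed.

Lemma count_gt i n : (i < n)%N -> count (fun j => i < j)%N (iota 0 n) = (n - i.+1)%N.
Proof.
move=> lin; rewrite -(subnKC lin) iotaD count_cat add0n.
rewrite (eq_in_count (a2 := pred0)) ?count_pred0; last first.
  by move=> j; rewrite mem_iota add0n => /andP[_]; rewrite ltnS /= ltnNge => ->.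
rewrite (eq_in_count (a2 := predT)) ?count_predT ?size_iota ?add0n //.
  by rewrite addKn.
by move=> j; rewrite mem_iota => /andP[].
Qed.

Lemma size_pairs : size (enum [pred ij : 'I_m * 'I_m | (val ij.1 < val ij.2)%N]) = 'C(m, 2).
Proof.
rewrite -cardE -sum1_card.
rewrite -(pair_big_dep xpredT (fun (i j : 'I_m) => (i < j)%N) (fun _ _ => 1%N)) /=.
have -> : \sum_(i < m) \sum_(j < m | (i < j)%N) 1 = \sum_(i < m) (m - i.+1)%N.
  apply: eq_bigr => i _.
  rewrite -(big_mkord (fun j => (i < j)%N) (fun _ => 1%N)) -big_filter sum1_size size_filter /index_iota subn0 count_gt //.
rewrite (reindex_inj rev_ord_inj) /= -bin2_sum big_mkord; apply: eq_bigr => i _.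
have := ltn_ord i; lia.
Qed.

Lemma size_ss : size ss = (1 + m + 'C(m, 2))%N.
Proof. by rewrite /ss /= size_cat !size_map size_pairs -enumT size_enum_ord add1n. Qed.

Lemma card_nth i : (i < size ss)%N ->
  #|nth set0 ss i| = (if i == 0%N then 0 else if (i <= m)%N then 1 else 2)%N.
Proof.
case: i => [|k]; first by rewrite /ss /= cards0.
rewrite size_ss => hk.
change (nth set0 ss k.+1) with (nth set0 ([seq [set i] | i <- enum 'I_m]
      ++ [seq [set ij.1; ij.2] | ij <- enum [pred ij : 'I_m * 'I_m | (val ij.1 < val ij.2)%N]]) k).
rewrite /= nth_cat size_map size_enum_ord.
case: ifP => km.
  have : nth set0 [seq [set i] | i <- enum 'I_m] k \in [seq [set i] | i <- enum 'I_m].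
    by apply: mem_nth; rewrite size_map size_enum_ord.
  by case/mapP => x _ ->; rewrite cards1.
have : nth set0 [seq [set ij.1; ij.2] | ij <- enum [pred ij : 'I_m * 'I_m | (val ij.1 < val ij.2)%N]] (k - m)
   \in [seq [set ij.1; ij.2] | ij <- enum [pred ij : 'I_m * 'I_m | (val ij.1 < val ij.2)%N]].
  apply: mem_nth; rewrite size_map size_pairs; move/negbT: km; rewrite -leqNgt; move: hk; lia.
case/mapP => -[a b]; rewrite mem_enum inE /= => ab ->; by rewrite card_pair.
Qed.

Lemma card_mono i j : (i <= j)%N -> (j < size ss)%N ->
  (#|nth set0 ss i| <= #|nth set0 ss j|)%N.
Proof.
move=> ij js; rewrite !card_nth //; last exact: leq_ltn_trans js.
case: (boolP (i == 0%N)) => [_|i0]; first by case: ifP => //; case: ifP.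
have j0 : (j == 0%N) = false by apply/negbTE; move: i0 ij; lia.
rewrite j0; case: (leqP j m) => hj; case: (leqP i m) => hi //; move: hj hi ij; lia.
Qed.
End SS.

End Part8.
Import Part8.

Module Part9.
Set Implicit Arguments. Unset Strict Implicit. Unset Printing Implicit Defensive.
Import Order.TTheory GRing.Theory Num.Theory Num.Def.
Local Open Scope ring_scope.

Section Main.
Variables (m : nat) (p : 'I_m -> nat).
Hypothesis pinj : injective p.
Hypothesis pprime : forall i, prime (p i).

Local Notation s := (S_seq p).
Local Notation N := (size (S_seq p)).

Lemma size_s : N = size (ss m).
Proof. by rewrite S_seq_ss size_map. Qed.

Definition Xn (k : nat) : {set 'I_m} := nth set0 (ss m) k.
Definition X (i : 'I_N) : {set 'I_m} := Xn i.

Lemma nth_s (i : 'I_N) : nth 0%N s i = Pr p (X i).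
Proof.
rewrite /X /Xn; move: (nat_of_ord i) (ltn_ord i) => k; rewrite size_s => hk.
by rewrite S_seq_ss (nth_map set0).
Qed.

Definition h (D : {set 'I_m}) : algC := \prod_(i in D) ((p i)%:R^-1 - 1).

Definition Bm : 'M[algC]_N :=
  \matrix_(d, x) (((X d \subset X x) * Pr p (X x))%N)%:R.
Definition g : 'rV[algC]_N := \row_d h (X d).

Lemma sum_h (K : {set 'I_m}) : (#|K| <= 2)%N ->
  \sum_(d < N | X d \subset K) h (X d) = (Pr p K)%:R^-1.
Proof.
move=> cK.
rewrite /X -(big_mkord (fun d => Xn d \subset K) (fun d => h (Xn d))) size_s.
rewrite /Xn -(big_nth set0 (fun D => D \subset K) h) -big_filter big_uniq; last first.
  exact/filter_uniq/uniq_ss.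
transitivity (\sum_(D : {set 'I_m} | D \subset K) h D).
  apply: eq_bigl => D; rewrite mem_filter; case: (boolP (D \subset K)) => //= DK.
  by rewrite mem_ss; apply: leq_trans cK; exact: subset_leq_card.
rewrite /h sum_subsets natr_prod -prodfV; apply: eq_bigr => i _.
by rewrite addrC subrK.
Qed.

Lemma X_card (i : 'I_N) : (#|X i| <= 2)%N.
Proof. by rewrite -mem_ss /X /Xn mem_nth // -size_s. Qed.

Lemma L_eq : lcm_matrix s = ctr Bm *m diag_mx g *m Bm.
Proof.
apply/matrixP => x y; rewrite /lcm_matrix !mxE !nth_s.
rewrite Pr_lcm // -sum_h; last first.
  by apply: leq_trans (X_card x); apply: subset_leq_card; exact: subsetIl.
rewrite mulr_sumr big_mkcond /=; apply: eq_bigr => d _; rewrite mul_mx_diag !mxE conjC_nat subsetI.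
case: (X d \subset X x); case: (X d \subset X y); rewrite /= ?mul0n ?mul1n ?mul0r ?mulr0 //.
by rewrite mulrAC.
Qed.

Lemma h1_neg i : (p i)%:R^-1 - 1 < 0 :> algC.
Proof.
rewrite subr_lt0 invf_lt1 ?ltr0n ?prime_gt0 // ltr1n; exact: prime_gt1.
Qed.

Lemma h_neq0 D : h D != 0.
Proof. by apply/prodf_neq0 => i _; rewrite ltr0_neq0 // h1_neg. Qed.

Lemma h_real D : h D \is Num.real.
Proof.
by rewrite /h rpred_prod // => i _; rewrite rpredB ?rpredV ?realn ?real1.
Qed.

Lemma h_pair (a b : 'I_m) : a != b ->
  h [set a; b] = ((p a)%:R^-1 - 1) * ((p b)%:R^-1 - 1).
Proof.
by move=> ab; rewrite /h big_setU1 ?big_set1 // inE.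
Qed.

Lemma Bm_unit : Bm \in unitmx.
Proof.
rewrite -unitmx_tr unitmxE det_trig; last first.
  apply/is_trig_mxP => i j ij; rewrite !mxE.
  case: (boolP (X j \subset X i)) => // sji.
  have := @card_mono m i j (ltnW ij); rewrite -size_s => /(_ (ltn_ord j)) cij.
  have /eqP eX : X j == X i by rewrite eqEcard sji cij.
  move: ij; rewrite /X /Xn in eX; move/eqP: eX; rewrite nth_uniq ?uniq_ss -?size_s //.
  by move=> /eqP ->; rewrite ltnn.
rewrite unitfE; apply/prodf_neq0 => i _; rewrite !mxE subxx mul1n pnatr_eq0 -lt0n.
exact: Pr_gt0.
Qed.

Lemma g_unit : diag_mx g \in unitmx.
Proof.
by rewrite unitmxE det_diag unitfE; apply/prodf_neq0 => i _; rewrite mxE h_neq0.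
Qed.

Lemma L_herm : lcm_matrix s \is hermsymmx.
Proof.
apply: realsym_hermsym.
  apply/is_hermitianmxP; rewrite expr0 scale1r; apply/matrixP => i j.
  by rewrite !mxE lcmnC.
by apply/mxOverP => i j; rewrite mxE realn.
Qed.

Lemma card_X (P : pred {set 'I_m}) : #|[set i : 'I_N | P (X i)]| = count P (ss m).
Proof.
rewrite -sum1_card (eq_bigl (fun i : 'I_N => P (X i))); last by move=> i; rewrite inE.
rewrite /X -(big_mkord (fun d => P (Xn d)) (fun _ => 1%N)) size_s /Xn.
by rewrite -(big_nth set0 P (fun _ => 1%N)) sum1_count.
Qed.

Lemma pair_pos (a b : 'I_m) : (a < b)%N -> 0 < h [set a; b].
Proof.
move=> ab; rewrite h_pair ?mulr_lt0_gt0 //; last by apply/eqP => e; move: ab; rewrite e ltnn.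
by rewrite nmulr_rgt0 ?h1_neg.
Qed.

Lemma count_neg : count (fun D => h D < 0) (ss m) = m.
Proof.
rewrite /ss /= count_cat !count_map /h big_set0 ltr10 /=.
rewrite (eq_count (a2 := predT)); last by move=> i /=; rewrite big_set1 h1_neg.
rewrite count_predT -enumT size_enum_ord (eq_in_count (a2 := pred0)) ?count_pred0 ?addn0 //.
move=> [a b]; rewrite mem_enum inE /= => ab; rewrite -/(h _).
by apply/negbTE/negP => /lt_trans/(_ (pair_pos ab)); rewrite ltxx.
Qed.

Lemma count_pos : count (fun D => 0 < h D) (ss m) = (1 + 'C(m, 2))%N.
Proof.
rewrite /ss /= count_cat !count_map /h big_set0 ltr01 /=.
rewrite (eq_count (a2 := pred0)); last by move=> i /=; rewrite big_set1; apply/negbTE/negP => /(lt_trans (h1_neg i)); rewrite ltxx.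
rewrite count_pred0 (eq_in_count (a2 := predT)) ?count_predT ?size_pairs //.
move=> [a b]; rewrite mem_enum inE /= => ab; rewrite -/(h _).
exact: pair_pos.
Qed.

End Main.

End Part9.
Import Part9.

Unset Implicit Arguments.
Import Order.TTheory GRing.Theory Num.Theory.
Local Open Scope ring_scope.

Theorem mainTheorem16 (m : nat) (p : 'I_m -> nat) :
  (1 <= m)%N -> injective p -> (forall i, prime (p i)) ->
  let s := S_seq p in
  [/\ uniq s,
      (size s).*2 = (m ^ 2 + m + 2)%N,
      lcm_matrix s \in unitmx,
      ineg (lcm_matrix s) = m
    & ipos (lcm_matrix s) = (1 + 'C(m, 2))%N /\ (ipos (lcm_matrix s)).*2 = (m ^ 2 - m + 2)%N].
Proof.
move=> _ pinj pp s.
have gr : forall i, (g p) 0 i \is Num.real by move=> i; rewrite mxE h_real.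
have [hn hp] := inertia (L_herm p) (Bm_unit pp) gr (L_eq pinj pp).
have hC : ('C(m, 2)).*2 = (m * (m - 1))%N.
  rewrite bin2 halfK oddM; case: (m) => [|k] //=.
  by rewrite andNb subn1 subn0.
have en : ineg (lcm_matrix s) = m.
  rewrite hn -[RHS](count_neg pp) -(card_X p); apply: eq_card => i; by rewrite !inE mxE.
have ep : ipos (lcm_matrix s) = (1 + 'C(m, 2))%N.
  rewrite hp -[RHS](count_pos pp) -(card_X p); apply: eq_card => i; by rewrite !inE mxE.
split => //.
- by rewrite /s S_seq_ss map_inj_uniq ?uniq_ss //; exact: Pr_inj.
- rewrite /s size_s size_ss !doubleD hC; case: (m) => [|k] //; lia.
- rewrite (L_eq pinj pp) !unitmx_mul (Bm_unit pp) (g_unit pp) !andbT.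
  by rewrite /ctr map_unitmx unitmx_tr Bm_unit.
- split => //; rewrite ep doubleD hC; case: (m) => [|k] //; lia.
Qed.
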